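(* For integers $r,s\ge0$ and $(a,b)\in\mathbb{Z}^2$, let $W_r(a,b)$ be the number of $r$-step nearest-neighbour walks in $\mathbb{Z}^2$ from $0$ to $(a,b)$, and let $W_{r,s}$ be the minimum of $W_r(a,b)$ over all $(a,b)$ with $|a|+|b|\le s$ and $a+b\equiv s \pmod 2$. Then for any even $\tau>0$ and $p\in[0,1]$, \[ R_\tau(p) \ge \sum_{k=0}^{\tau/2}\ \sum_{r+s=2k} \binom{r+s}{r}(1-p)^s\left(\frac{p}{4}\right)^r W_{r,s}. \] In particular, \[ R_4(p) = 1 + \frac{1}{4}p^2+\frac{1}{2}p(1-p) + \frac{9}{64}p^{4}+ \frac{9}{16}p^{3}(1-p)+\frac{3}{8} p^2(1-p)^2 . \]
   Context: A sequence of instructions is an infinite walk $(x_t)_{t\ge 0}$ in $\mathbb{Z}^2$ with $x_0=0$ and $x_{t+1}-x_t\in\{(\pm1,0),(0,\pm1)\}$. The guided random walk with error probability $p$ following it is the Markov chain $(X_t)_{t\ge0}$ with $X_0=0$ and independent increments, $X_{t+1}-X_t = x_{t+1}-x_t$ with probability $1-p$, and $X_{t+1}-X_t$ uniformly distributed on $\{(\pm1,0),(0,\pm1)\}$ with probability $p$. For a positive integer $\tau$, $R_\tau(p) := \min \mathbb{E}[\#\{t\in\{0,1,\dots,\tau\} : X_t = 0\}]$, the minimum being over all sequences of instructions. *)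

(* Defs.v *)
From HB Require Import structures.
From mathcomp Require Import all_boot all_order all_algebra.
From mathcomp Require Import all_classical all_reals.
Set Implicit Arguments. Unset Strict Implicit. Unset Printing Implicit Defensive.
Import Order.TTheory GRing.Theory Num.Theory.
Local Open Scope ring_scope.
Local Open Scope classical_set_scope.

Definition dirx (d : 'I_4) : int :=
  match val d with 0%N => 1 | 1%N => -1 | _ => 0 end.
Definition diry (d : 'I_4) : int :=
  match val d with 2%N => 1 | 3%N => -1 | _ => 0 end.

(* A sequence of instructions is an infinite walk starting at 0; it is
   determined by its increments x_{t+1} - x_t = step (ins t). *)
Definition instructions := nat -> 'I_4.

Definition endx (t : nat) (e : {ffun 'I_t -> 'I_4}) : int := \sum_(i < t) dirx (e i).
Definition endy (t : nat) (e : {ffun 'I_t -> 'I_4}) : int := \sum_(i < t) diry (e i).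

Definition step_prob {R : realType} (p : R) (d e : 'I_4) : R :=
  (1 - p) * (e == d)%:R + p / 4.

(* P(X_t = 0) for the guided random walk following ins (increments are
   independent, so the law of (X_1-X_0,...,X_t-X_{t-1}) is the product law). *)
Definition prob_zero {R : realType} (p : R) (ins : instructions) (t : nat) : R :=
  \sum_(e : {ffun 'I_t -> 'I_4} | (endx e == 0) && (endy e == 0))
     \prod_(i < t) step_prob p (ins i) (e i).

Definition expected_visits {R : realType} (p : R) (tau : nat) (ins : instructions) : R :=
  \sum_(t < tau.+1) prob_zero p ins t.

(* R_tau(p): minimum (= infimum, attained) over all sequences of instructions. *)
Definition Rtau {R : realType} (tau : nat) (p : R) : R :=
  inf [set expected_visits p tau ins | ins in [set: instructions]].

Definition W (r : nat) (a b : int) : nat :=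
  #|[set e : {ffun 'I_r -> 'I_4} | (endx e == a) && (endy e == b)]|.

Definition admissible (s : nat) (ab : int * int) : bool :=
  ((absz ab.1 + absz ab.2)%N <= s)%N && (odd (absz (ab.1 + ab.2)) == odd s).

Definition int_range (s : nat) : seq int :=
  [seq (k%:Z - s%:Z) | k <- iota 0 (s.*2.+1)].

(* W_{r,s}: minimum of W_r(a,b) over admissible (a,b); every admissible
   (a,b) lies in [-s,s]^2, and (s,0) is admissible, so it is a valid seed. *)
Definition Wmin (r s : nat) : nat :=
  \big[minn/W r s%:Z 0]_(ab <- [seq (a, b) | a <- int_range s, b <- int_range s]
                           | admissible s ab) W r ab.1 ab.2.

(* Main.v *)
Require Import Defs.
From HB Require Import structures.
From mathcomp Require Import all_boot all_order all_algebra.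
From mathcomp Require Import all_classical all_reals.
From mathcomp Require Import zify ring lra.
Import Order.TTheory GRing.Theory Num.Theory.
Set Implicit Arguments. Unset Strict Implicit. Unset Printing Implicit Defensive.
Local Open Scope ring_scope.

Definition ext t (f : {ffun 'I_t -> 'I_4}) (k : 'I_4) : {ffun 'I_t.+1 -> 'I_4} :=
  [ffun i => if unlift ord_max i is Some j then f j else k].
Definition restr t (e : {ffun 'I_t.+1 -> 'I_4}) : {ffun 'I_t -> 'I_4} * 'I_4 :=
  ([ffun j => e (lift ord_max j)], e ord_max).

Lemma big_ffunS (V : Type) (idx : V) (op : Monoid.com_law idx) t
  (G : {ffun 'I_t.+1 -> 'I_4} -> V) :
  \big[op/idx]_(e : {ffun 'I_t.+1 -> 'I_4}) G e = \big[op/idx]_(f : {ffun 'I_t -> 'I_4}) \big[op/idx]_(k : 'I_4) G (ext f k).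
Proof.
rewrite pair_big /=.
rewrite (reindex (fun fk : {ffun 'I_t -> 'I_4} * 'I_4 => ext fk.1 fk.2)) //.
exists (@restr t) => [[f k] _|e _].
  rewrite /restr /ext; congr pair; last by rewrite ffunE unlift_none.
  by apply/ffunP => j; rewrite !ffunE liftK.
rewrite /restr /ext /=; apply/ffunP => i; rewrite ffunE.
by case: unliftP => [j ->|->]; rewrite ?ffunE.
Qed.

Lemma wl t (i : 'I_t) H : widen_ord H i = lift ord_max i.
Proof. by apply: val_inj; rewrite /= /bump leqNgt ltn_ord. Qed.

Lemma endxS t f k : endx (@ext t f k) = endx f + dirx k.
Proof.
rewrite /endx big_ord_recr /= ffunE unlift_none; congr (_ + _).
by apply: eq_bigr => i _; rewrite ffunE wl liftK.
Qed.
Lemma endyS t f k : endy (@ext t f k) = endy f + diry k.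
Proof.
rewrite /endy big_ord_recr /= ffunE unlift_none; congr (_ + _).
by apply: eq_bigr => i _; rewrite ffunE wl liftK.
Qed.

Lemma prodS (R : comRingType) t (h : 'I_t.+1 -> 'I_4 -> R) f k :
  \prod_(i < t.+1) h i (@ext t f k i) = \prod_(i < t) h (lift ord_max i) (f i) * h ord_max k.
Proof.
rewrite big_ord_recr /= ffunE unlift_none; congr (_ * _).
by apply: eq_bigr => i _; rewrite ffunE wl liftK.
Qed.

Lemma W_sum r a b : W r a b = \sum_(e : {ffun 'I_r -> 'I_4}) ((endx e == a) && (endy e == b) : nat).
Proof.
rewrite /W -sum1_card big_mkcond /=; apply: eq_bigr => e _.
rewrite unfold_in /= asboolb. by case: (_ && _).
Qed.

Lemma WS r a b : W r.+1 a b = \sum_(k < 4) W r (a - dirx k) (b - diry k).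
Proof.
rewrite W_sum big_ffunS exchange_big /=; apply: eq_bigr => k _.
rewrite W_sum; apply: eq_bigr => f _; rewrite endxS endyS.
by congr (nat_of_bool (_ && _)); apply/eqP/eqP => ?; lia.
Qed.

Lemma W0 a b : W 0 a b = ((a == 0) && (b == 0) : nat).
Proof.
rewrite W_sum (eq_bigr (fun _ => ((a == 0) && (b == 0) : nat))).
  by rewrite sum_nat_const card_ffun !card_ord expn0 mul1n.
by move=> e _; rewrite /endx /endy !big_ord0 ![0 == _]eq_sym.
Qed.

Fixpoint Wc (r : nat) (a b : int) : nat :=
  match r with
  | 0%N => ((a == 0) && (b == 0) : nat)
  | r'.+1 => (Wc r' (a - 1) b + Wc r' (a + 1) b + Wc r' a (b - 1) + Wc r' a (b + 1))%N
  end.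

Lemma WcE r a b : W r a b = Wc r a b.
Proof.
elim: r a b => [|r IH] a b; first by rewrite W0.
rewrite WS !big_ord_recr big_ord0 /= !IH /dirx /diry /=.
by rewrite !subr0 !opprK add0r.
Qed.


Definition Wminc r s :=
  foldr (fun ab acc => if admissible s ab then minn (Wc r ab.1 ab.2) acc else acc)
    (Wc r s%:Z 0) [seq (a, b) | a <- int_range s, b <- int_range s].

Lemma WminE r s : Wmin r s = Wminc r s.
Proof.
rewrite /Wmin /Wminc; elim: [seq _ | a <- _, b <- _] => [|x l IH].
  by rewrite big_nil WcE.
by rewrite big_cons /= IH WcE.
Qed.

Lemma bigmin_le (T : eqType) (l : seq T) (P : pred T) (F : T -> nat) x0 z :
  z \in l -> P z -> (\big[minn/x0]_(i <- l | P i) F i <= F z)%N.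
Proof.
elim: l => [|x l IH] //; rewrite inE => /orP [/eqP <-|zl] Pz; rewrite big_cons.
  by rewrite Pz geq_minl.
case: (P x); last exact: IH.
by rewrite (leq_trans (geq_minr _ _)) ?IH.
Qed.

Lemma in_int_range s (a : int) : (absz a <= s)%N -> a \in int_range s.
Proof.
move=> h; apply/mapP; exists (absz (a + s%:Z)).
  rewrite mem_iota /=; lia.
lia.
Qed.

Lemma Wmin_le r s a b : admissible s (a, b) -> (Wmin r s <= W r a b)%N.
Proof.
move=> ad; rewrite /Wmin.
have := @bigmin_le _ [seq (a, b) | a <- int_range s, b <- int_range s] (admissible s) (fun ab => W r ab.1 ab.2) (W r s 0) (a, b); apply => //.
have h : (absz a + absz b <= s)%N by move: ad => /andP [].
by apply: (@allpairs_f _ _ _ pair); apply: in_int_range; lia.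
Qed.

Lemma adm_seq (T : Type) (l : seq T) (g : T -> 'I_4) :
  let X := \sum_(x <- l) dirx (g x) in let Y := \sum_(x <- l) diry (g x) in
  (absz X + absz Y <= size l)%N && (odd (absz (X + Y)) == odd (size l)).
Proof.
elim: l => [|x l IH] /=; first by rewrite !big_nil.
rewrite !big_cons; move: IH; set X := \sum_(_ <- _) _; set Y := \sum_(_ <- _) _.
move=> /andP [h1 /eqP h2].
case: (g x) => [[|[|[|[|m]]]] Hm] //; rewrite /dirx /diry /=; apply/andP; split;
  try (apply/eqP); lia.
Qed.

Lemma adm_set t (J : {set 'I_t}) (d : 'I_t -> 'I_4) :
  admissible #|J| (- \sum_(i in J) dirx (d i), - \sum_(i in J) diry (d i)).
Proof.
have := adm_seq (enum J) d; rewrite /= -cardE !big_enum /= => /andP [h1 /eqP h2].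
rewrite /admissible /=; apply/andP; split; first by rewrite !abszN.
by rewrite -opprD abszN h2.
Qed.

Lemma W_fin r a b : W r a b = #|[set e : {ffun 'I_r -> 'I_4} | (endx e == a) && (endy e == b)]|.
Proof. by apply: eq_card => e; rewrite unfold_in /= asboolb inE. Qed.

Definition psi t (K : {set 'I_t}) (e : {ffun 'I_t -> 'I_4}) : {ffun 'I_#|K| -> 'I_4} :=
  [ffun j => e (enum_val j)].

Lemma endx_psi t K (e : {ffun 'I_t -> 'I_4}) :
  endx e = \sum_(i in ~: K) dirx (e i) + endx (psi K e).
Proof.
rewrite /endx (bigID (fun i => i \in ~: K)) /=; congr (_ + _).
rewrite (eq_bigl (fun i => i \in K)); last by move=> i; rewrite inE negbK.
by rewrite big_enum_val; apply: eq_bigr => j _; rewrite ffunE.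
Qed.
Lemma endy_psi t K (e : {ffun 'I_t -> 'I_4}) :
  endy e = \sum_(i in ~: K) diry (e i) + endy (psi K e).
Proof.
rewrite /endy (bigID (fun i => i \in ~: K)) /=; congr (_ + _).
rewrite (eq_bigl (fun i => i \in K)); last by move=> i; rewrite inE negbK.
by rewrite big_enum_val; apply: eq_bigr => j _; rewrite ffunE.
Qed.

Lemma count_agree t (K : {set 'I_t}) (d : 'I_t -> 'I_4) a b :
  #|[set e : {ffun 'I_t -> 'I_4} | [&& endx e == a, endy e == b & [forall i in ~: K, e i == d i]]]|
  = W #|K| (a - \sum_(i in ~: K) dirx (d i)) (b - \sum_(i in ~: K) diry (d i)).
Proof.
rewrite W_fin.
set A := [set e : {ffun 'I_t -> 'I_4} | _].
set B := [set f : {ffun 'I_#|K| -> 'I_4} | _].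
have agS : forall e : {ffun 'I_t -> 'I_4}, [forall i in ~: K, e i == d i] ->
   \sum_(i in ~: K) dirx (e i) = \sum_(i in ~: K) dirx (d i) /\
   \sum_(i in ~: K) diry (e i) = \sum_(i in ~: K) diry (d i).
  move=> e /forallP ag; split; apply: eq_bigr => i iK; have := ag i; rewrite iK /= => /eqP -> //.
have injA : {in A &, injective (psi K)}.
  move=> e1 e2; rewrite !inE => /and3P [_ _ /forallP h1] /and3P [_ _ /forallP h2] eq.
  apply/ffunP => i; case: (boolP (i \in K)) => iK.
    rewrite -(enum_rankK_in iK iK).
    by move/ffunP: eq => /(_ (enum_rank_in iK i)); rewrite !ffunE.
  have iK' : i \in ~: K by rewrite inE iK.
  by have := h1 i; have := h2 i; rewrite iK' /= => /eqP -> /eqP ->.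
have imA : psi K @: A = B.
  apply/setP => f; rewrite inE; apply/imsetP/idP.
    case=> e; rewrite inE => /and3P [/eqP ex /eqP ey ag] ->.
    have [sx sy] := agS e ag.
    apply/andP; split; apply/eqP.
      by rewrite -ex (endx_psi K) sx; ring.
    by rewrite -ey (endy_psi K) sy; ring.
  move=> /andP [/eqP fx /eqP fy].
  pose e0 := [ffun i => if [pick j : 'I_#|K| | enum_val j == i] is Some j then f j else d i].
  have pe : psi K e0 = f.
    apply/ffunP => j; rewrite !ffunE; case: pickP => [j' /eqP /enum_val_inj -> // |].
    by move=> /(_ j); rewrite eqxx.
  have ag : [forall i in ~: K, e0 i == d i].
    apply/forallP => i; apply/implyP; rewrite inE => iK; rewrite ffunE.
    case: pickP => [j /eqP ji|//]; move: iK; rewrite -ji.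
    by rewrite enum_valP.
  exists e0 => //; rewrite inE ag andbT.
  have [sx sy] := agS e0 ag.
  apply/andP; split; apply/eqP.
    by rewrite (endx_psi K) sx pe fx; ring.
  by rewrite (endy_psi K) sy pe fy; ring.
by rewrite -imA card_in_imset.
Qed.

Lemma prod_ind (R : comNzRingType) (I : finType) (P : pred I) (b : I -> bool) :
  \prod_(i | P i) ((b i : nat)%:R : R) = (([forall (i | P i), b i]) : nat)%:R.
Proof.
case: (boolP [forall (i | P i), b i]) => [/forallP h|].
  by rewrite big1 // => i Pi; have := h i; rewrite Pi /= => ->.
rewrite negb_forall => /existsP [i]; rewrite negb_imply => /andP [Pi bi].
by rewrite (bigD1 i) //= (negbTE bi) mul0r.
Qed.

Lemma card_sum (I : finType) (P : pred I) (b : pred I) :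
  \sum_(e | P e) (b e : nat) = #|[set e | P e && b e]|.
Proof.
rewrite -sum1_card [RHS]big_mkcond [LHS]big_mkcond /=; apply: eq_bigr => e _.
by rewrite inE; case: (P e); case: (b e).
Qed.

Lemma sum_card (R : nzRingType) t (f : nat -> R) :
  \sum_(K : {set 'I_t}) f #|K| = \sum_(r < t.+1) 'C(t, r)%:R * f r.
Proof.
rewrite (partition_big (fun K : {set 'I_t} => (inord #|K| : 'I_t.+1)) xpredT) //=.
apply: eq_bigr => r _.
have cK : forall K : {set 'I_t}, (inord #|K| == r :> 'I_t.+1) = (#|K| == r).
  move=> K; have hK : (#|K| <= t)%N by rewrite -[X in (_ <= X)%N](card_ord t) max_card.
  apply/eqP/eqP => h; first (by rewrite -h inordK); last first.
  by apply: val_inj; rewrite /= h inordK.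
transitivity (\sum_(K in [set K : {set 'I_t} | #|K| == r]) f r).
  by apply: eq_big => K; [rewrite inE cK | rewrite cK => /eqP ->].
by rewrite sumr_const card_draws card_ord mulr_natl.
Qed.

Lemma decomp (R : realType) (p : R) t (d : 'I_t -> 'I_4) :
  \sum_(e : {ffun 'I_t -> 'I_4} | (endx e == 0) && (endy e == 0))
     \prod_(i < t) step_prob p (d i) (e i)
  = \sum_(K : {set 'I_t}) (1 - p) ^+ (t - #|K|) * (p / 4) ^+ #|K| *
      (W #|K| (- \sum_(i in ~: K) dirx (d i)) (- \sum_(i in ~: K) diry (d i)))%:R.
Proof.
transitivity (\sum_(e : {ffun 'I_t -> 'I_4} | (endx e == 0) && (endy e == 0))
   \sum_(K : {set 'I_t}) (1 - p) ^+ (t - #|K|) * (p / 4) ^+ #|K| *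
      (([forall i in ~: K, e i == d i]) : nat)%:R).
  apply: eq_bigr => e _.
  rewrite (eq_bigr (fun i => p / 4 + (1 - p) * ((e i == d i) : nat)%:R)); last first.
    by move=> i _; rewrite /step_prob addrC.
  rewrite bigA_distr; apply: eq_bigr => K _.
  rewrite (bigID (fun i => i \in K)) /=.
  rewrite (eq_bigr (fun=> p / 4)); last by move=> i ->.
  rewrite (eq_bigl (fun i => i \in K)) // prodr_const.
  rewrite (eq_bigr (fun i => (1 - p) * ((e i == d i) : nat)%:R)); last first.
    by move=> i /negbTE ->.
  rewrite big_split /= (eq_bigl (fun i => i \in ~: K)); last by move=> i; rewrite inE.
  rewrite prodr_const prod_ind.
  have -> : #|~: K| = (t - #|K|)%N by have := cardsC K; rewrite card_ord; lia.
  have -> : [forall (i | i \notin K), e i == d i] = [forall i in ~: K, e i == d i].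
    by apply/forallP/forallP => h i; have := h i; rewrite inE.
  by rewrite mulrA (mulrC (_ ^+ #|K|)).
rewrite exchange_big /=; apply: eq_bigr => K _.
rewrite -mulr_sumr -natr_sum card_sum; congr (_ * _%:R).
have := count_agree K d 0 0; rewrite !sub0r => <-.
by apply: eq_card => e; rewrite !inE andbA.
Qed.

Lemma step_ge0 (R : realType) (p : R) d e : 0 <= p <= 1 -> 0 <= step_prob p d e.
Proof.
move=> /andP [p0 p1]; rewrite /step_prob; apply: addr_ge0; last exact: divr_ge0.
by apply: mulr_ge0; rewrite ?subr_ge0 ?ler0n.
Qed.

Lemma prob_ge0 (R : realType) (p : R) ins t : 0 <= p <= 1 -> 0 <= prob_zero p ins t.
Proof.
move=> hp; apply: sumr_ge0 => e _; apply: prodr_ge0 => i _; exact: step_ge0.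
Qed.

Lemma prob_lb (R : realType) (p : R) ins t : 0 <= p <= 1 ->
  \sum_(r < t.+1) 'C(t, r)%:R * (1 - p) ^+ (t - r) * (p / 4) ^+ r * (Wmin r (t - r))%:R
  <= prob_zero p ins t.
Proof.
move=> /andP [p0 p1].
rewrite /prob_zero (decomp p (fun i : 'I_t => ins i)).
have -> : \sum_(r < t.+1) 'C(t, r)%:R * (1 - p) ^+ (t - r) * (p / 4) ^+ r * (Wmin r (t - r))%:R
  = \sum_(K : {set 'I_t}) (1 - p) ^+ (t - #|K|) * (p / 4) ^+ #|K| * (Wmin #|K| (t - #|K|))%:R.
  by rewrite (@sum_card _ t (fun r => (1 - p) ^+ (t - r) * (p / 4) ^+ r * (Wmin r (t - r))%:R));
    apply: eq_bigr => r _; rewrite !mulrA.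
apply: ler_sum => K _; apply: ler_wpM2l.
  by apply: mulr_ge0; apply: exprn_ge0; [rewrite subr_ge0 | apply: divr_ge0].
rewrite ler_nat; apply: Wmin_le.
have := adm_set (~: K) (fun i => ins i).
have -> // : #|~: K| = (t - #|K|)%N by have := cardsC K; rewrite card_ord; lia.
Qed.

Lemma sum_evens (R : realType) (g : nat -> R) m : (forall t, 0 <= g t) ->
  \sum_(k < m.+1) g (k.*2) <= \sum_(t < (m.*2).+1) g t.
Proof.
move=> g0; elim: m => [|m IH]; first by rewrite !big_ord1.
rewrite big_ord_recr /= doubleS [X in _ <= X]big_ord_recr big_ord_recr /=.
rewrite -addrA; apply: lerD; first exact: IH.
by rewrite lerDr g0.
Qed.

Lemma part1 (R : realType) :
  (forall (tau : nat) (p : R), (0 < tau)%N -> ~~ odd tau -> 0 <= p <= 1 ->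
     \sum_(k < (tau./2).+1) \sum_(r < (k.*2).+1)
        ('C(k.*2, r))%:R * (1 - p) ^+ (k.*2 - r) * (p / 4) ^+ r
          * (Wmin r (k.*2 - r))%:R
     <= Rtau tau p).
Proof.
move=> tau p tau0 ev hp.
rewrite /Rtau; apply: lb_le_inf.
  by exists (expected_visits p tau (fun _ => ord0)); exists (fun _ => ord0).
move=> x [ins _ <-].
have htau : tau = (tau./2).*2.
  by have := odd_double_half tau; rewrite (negbTE ev) add0n.
apply: (@le_trans _ _ (\sum_(k < (tau./2).+1) prob_zero p ins k.*2)).
  by apply: ler_sum => k _; exact: prob_lb.
rewrite /expected_visits [in X in _ <= X]htau.
by apply: sum_evens => t; apply: prob_ge0.
Qed.

Lemma east (R : realType) (p : R) t :
  prob_zero p (fun _ => ord0) t =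
  \sum_(r < t.+1) 'C(t, r)%:R * ((1 - p) ^+ (t - r) * (p / 4) ^+ r *
        (Wc r (- ((t - r)%N)%:Z) 0)%:R).
Proof.
rewrite /prob_zero (decomp p (fun i : 'I_t => ord0)).
rewrite -(@sum_card _ t (fun r => (1 - p) ^+ (t - r) * (p / 4) ^+ r *
        (Wc r (- ((t - r)%N)%:Z) 0)%:R)).
apply: eq_bigr => K _; rewrite -WcE.
have -> : \sum_(i in ~: K) dirx ord0 = ((t - #|K|)%N)%:Z.
  rewrite sumr_const /dirx /=.
  have -> : #|~: K| = (t - #|K|)%N by have := cardsC K; rewrite card_ord; lia.
  by rewrite natz.
by rewrite big1 // oppr0.
Qed.

Ltac natnorm :=
  repeat match goal with
  | |- context [ GRing.natmul 1 ?n ] =>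
      let m := eval vm_compute in n in progress change n with m
  | |- context [ GRing.exp ?x ?n ] =>
      let m := eval vm_compute in n in progress change n with m
  end.

Lemma upper (R : realType) (p : R) :
  expected_visits p 4 (fun _ => ord0) =
  1 + p ^+ 2 / 4 + p * (1 - p) / 2 + 9 / 64 * p ^+ 4
                + 9 / 16 * p ^+ 3 * (1 - p) + 3 / 8 * p ^+ 2 * (1 - p) ^+ 2.
Proof.
rewrite /expected_visits.
under eq_bigr do rewrite east.
rewrite !big_ord_recr !big_ord0 /=.
natnorm.
by field.
Qed.

Lemma lower_val (R : realType) (p : R) :
     \sum_(k < (4./2).+1) \sum_(r < (k.*2).+1)
        ('C(k.*2, r))%:R * (1 - p) ^+ (k.*2 - r) * (p / 4) ^+ r
          * (Wmin r (k.*2 - r))%:R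
  = 1 + p ^+ 2 / 4 + p * (1 - p) / 2 + 9 / 64 * p ^+ 4
                + 9 / 16 * p ^+ 3 * (1 - p) + 3 / 8 * p ^+ 2 * (1 - p) ^+ 2.
Proof.
rewrite !big_ord_recr big_ord0 /=.
rewrite ?big_ord0.
rewrite !WminE.
natnorm.
by field.
Qed.

Unset Implicit Arguments.

Theorem proposition3 (R : realType) :
  (forall (tau : nat) (p : R), (0 < tau)%N -> ~~ odd tau -> 0 <= p <= 1 ->
     \sum_(k < (tau./2).+1) \sum_(r < (k.*2).+1)
        ('C(k.*2, r))%:R * (1 - p) ^+ (k.*2 - r) * (p / 4) ^+ r
          * (Wmin r (k.*2 - r))%:R
     <= Rtau tau p) /\
  (forall p : R, 0 <= p <= 1 ->
     Rtau 4 p = 1 + p ^+ 2 / 4 + p * (1 - p) / 2 + 9 / 64 * p ^+ 4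
                + 9 / 16 * p ^+ 3 * (1 - p) + 3 / 8 * p ^+ 2 * (1 - p) ^+ 2).
Proof.
split; first exact: part1.
move=> p hp; apply/eqP; rewrite eq_le; apply/andP; split.
  rewrite -(upper p) /Rtau.
  have [_ h] : has_lbound [set expected_visits p 4 ins | ins in [set: instructions]] /\
      lbound [set expected_visits p 4 ins | ins in [set: instructions]]
        (inf [set expected_visits p 4 ins | ins in [set: instructions]]).
    have hl : has_lbound [set expected_visits p 4 ins | ins in [set: instructions]].
      exists 0 => x [ins _ <-]; apply: sumr_ge0 => t _; exact: prob_ge0.
    by split => //; apply: ge_inf.
  by apply: h; exists (fun _ => ord0).
by rewrite -lower_val; apply: part1.
Qed.
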